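(* For any trie $\mathcal{T}$, each edge of the suffix tree $\mathsf{STree}(\mathcal{T})$ contains at most one implicit node $v$ such that $\mathsf{str}(v)$ is a palindrome.
   Context: A trie $\mathcal{T}$ is a rooted tree in which each edge is labeled by a single character and the out-going edges of each node have mutually distinct labels. Path labels are read leaf-to-root: for $\mathbf{u}$ a descendant of $\mathbf{v}$, $\mathsf{str}(\mathbf{u},\mathbf{v})$ is the string of edge labels on the path from $\mathbf{u}$ up to $\mathbf{v}$. By convention the root $\mathbf{r}$ of $\mathcal{T}$ has a single child, reached by an edge labeled by a special character $\$$ occurring nowhere else in $\mathcal{T}$. For each node $\mathbf{v}$ let $\mathsf{suf}(\mathbf{v})=\mathsf{str}(\mathbf{v},\mathbf{r})$. The suffix tree $\mathsf{STree}(\mathcal{T})$ is the compacted trie (edges labeled by non-empty strings, out-going edge labels of each node beginning with distinct characters, every internal node other than the root having at least two children) whose leaves are in one-to-one correspondence with the non-root nodes $\mathbf{v}$ of $\mathcal{T}$, the leaf for $\mathbf{v}$ spelling $\mathsf{suf}(\mathbf{v})$ from the root. For a point (locus) $v$ on $\mathsf{STree}(\mathcal{T})$, $\mathsf{str}(v)$ is the string spelled from the root to $v$; loci at nodes are explicit nodes and loci strictly inside edges are implicit nodes. A palindrome is a string equal to its reversal. *)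

(* Defs.v *)
From mathcomp Require Import all_boot.
Set Implicit Arguments. Unset Strict Implicit. Unset Printing Implicit Defensive.

(* A trie is given by a finite node type V, a root r, a parent function par
   (par r = r) and the label lab v of the edge from a non-root node v to its
   parent par v.  [dollar] is the special character '$'. *)
Section Trie.
Variables (Sigma : eqType) (V : finType) (r : V) (par : V -> V) (lab : V -> Sigma).

Definition is_trie (dollar : Sigma) : Prop :=
  [/\ par r = r,
      (forall v, iter #|V| par v = r),
      (forall u v, u != r -> v != r -> par u = par v -> lab u = lab v -> u = v),
      (exists c, [/\ c != r, par c = r, lab c = dollar &
                    forall v, v != r -> par v = r -> v = c]) &
      (forall v, v != r -> lab v = dollar -> par v = r)].

Fixpoint sufn (n : nat) (v : V) : seq Sigma :=
  match n with
  | 0 => [::]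
  | n'.+1 => if v == r then [::] else lab v :: sufn n' (par v)
  end.

Definition suf (v : V) : seq Sigma := sufn #|V| v.

(* Suffix tree STree(T): compacted trie of {suf v | v non-root node}. *)
Definition is_locus (w : seq Sigma) : Prop :=
  exists v, v != r /\ prefix w (suf v).

Definition is_leaf (w : seq Sigma) : Prop :=
  exists v, v != r /\ w = suf v.

Definition is_branching (w : seq Sigma) : Prop :=
  exists a b : Sigma, [/\ a != b, is_locus (rcons w a) & is_locus (rcons w b)].

Definition explicit (w : seq Sigma) : Prop :=
  w = [::] \/ is_leaf w \/ is_branching w.

Definition sprefix (u w : seq Sigma) : bool := prefix u w && (size u < size w).

Definition STedge (u x : seq Sigma) : Prop :=
  [/\ explicit u, explicit x, sprefix u x &
      forall w, sprefix u w -> sprefix w x -> ~ explicit w].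

Definition implicit_on_edge (u x w : seq Sigma) : Prop :=
  [/\ sprefix u w, sprefix w x, is_locus w & ~ explicit w].

End Trie.

Definition palindrome (Sigma : eqType) (w : seq Sigma) : bool := w == rev w.

(* Main.v *)
Require Import Defs.
From mathcomp Require Import all_boot.
From mathcomp Require Import zify.
Set Implicit Arguments. Unset Strict Implicit. Unset Printing Implicit Defensive.

Section H.
Variables (Sigma : eqType) (V : finType) (r : V) (par : V -> V) (lab : V -> Sigma).
Hypothesis Hiter : forall v, iter #|V| par v = r.

Lemma sufn_stable n w : iter n par w = r ->
  forall m, n <= m -> sufn r par lab m w = sufn r par lab n w.
Proof.
elim: n w => [|n IH] w /= Hw m Hm.
  by rewrite Hw; case: m {Hm} => //= m; rewrite eqxx.
case: m Hm => // m Hm /=; case: eqP => // _.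
rewrite IH //; by rewrite -iterSr.
Qed.

Lemma suf_r : suf r par lab r = [::].
Proof. by rewrite /suf; case: #|V| => //= n; rewrite eqxx. Qed.

Lemma suf_cons v : v != r -> suf r par lab v = lab v :: suf r par lab (par v).
Proof.
move=> nv; rewrite /suf.
have := Hiter v; case E: #|V| => [|n] /= Hv.
  by rewrite Hv eqxx in nv.
rewrite (negbTE nv); congr (_ :: _).
have Hp : iter n par (par v) = r by rewrite -iterSr iterS.
symmetry; exact: (@sufn_stable n (par v) Hp n.+1 (leqnSn n)).
Qed.

Lemma suf_drop k v : k <= size (suf r par lab v) ->
  exists v', suf r par lab v' = drop k (suf r par lab v).
Proof.
elim: k v => [|k IH] v Hk; first by exists v; rewrite drop0.
case: (v =P r) => [E|/eqP nv]; first by rewrite E suf_r in Hk.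
rewrite suf_cons // in Hk *; exact: IH.
Qed.

Lemma explicit_locus x : explicit r par lab x -> x != [::] -> is_locus r par lab x.
Proof.
case=> [->//|[[v [nv ->]]|[a [b [_ [v [nv Hv]] _]]]]] _.
  by exists v; split => //; exact: prefix_refl.
exists v; split => //; apply: prefix_trans Hv; exact: prefix_rcons.
Qed.

Lemma stepA u x w1 s : STedge r par lab u x -> sprefix u w1 -> prefix w1 x ->
  is_leaf r par lab s -> prefix w1 s -> prefix x s.
Proof.
case=> _ Ex /andP[ux sux] Hno /andP[uw1 suw1] w1x Ls w1s.
suff H : forall n p, prefix w1 p -> prefix p x -> prefix p s ->
   size x - size p = n -> prefix x s by exact: (H _ w1 (prefix_refl _)).
elim=> [|n IH] p H1 H2 H3 Hn.
  move/prefixP: H2 => [t Ht].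
  have t0 : size t = 0 by move: Hn; rewrite Ht size_cat; lia.
  by move: t0 Ht; case: t => // _; rewrite cats0 => ->.
move/prefixP: (H2) => [t Ht]; move/prefixP: (H3) => [q Hq].
have: size t = n.+1 by move: Hn; rewrite Ht size_cat; lia.
case: t Ht => // b t' Ht _.
have np : ~ explicit r par lab p.
  apply: Hno.
    apply/andP; split; first exact: prefix_trans uw1 H1.
    have := size_prefix H1; lia.
  apply/andP; split => //; rewrite Ht size_cat /=; lia.
case: q Hq => [|a q'] Hq.
  by case: np; right; left; case: Ls => v [nv Hv]; exists v; split => //; rewrite -Hv Hq cats0.
case: (a =P b) => [Eab|/eqP nab].
  apply: (IH (rcons p b)).
  - by apply: prefix_trans H1 _; exact: prefix_rcons.
  - by rewrite Ht -cat_rcons; exact: prefix_prefix.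
  - by rewrite Hq -Eab -cat_rcons; exact: prefix_prefix.
  - by move: Hn; rewrite Ht size_cat size_rcons /=; lia.
case: np; right; right; exists a, b; split => //.
  case: Ls => v [nv Hv]; exists v; split => //.
  by rewrite -Hv Hq -cat_rcons; exact: prefix_prefix.
have [v [nv Hv]] : is_locus r par lab x.
  apply: explicit_locus => //; apply/eqP => x0; by rewrite x0 ltn0 in sux.
exists v; split => //; apply: prefix_trans Hv.
by rewrite Ht -cat_rcons; exact: prefix_prefix.
Qed.

Lemma prefix_cmp (a b x : seq Sigma) : prefix a x -> prefix b x -> size a <= size b -> prefix a b.
Proof.
rewrite !prefixE => /eqP Ha /eqP Hb le.
by rewrite -Hb take_takel // Ha.
Qed.

Lemma key u x w1 w2 : STedge r par lab u x ->
  implicit_on_edge r par lab u x w1 -> implicit_on_edge r par lab u x w2 ->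
  palindrome w1 -> palindrome w2 -> size w1 < size w2 -> False.
Proof.
move=> He [su1 /andP[s1x _] L1 NE1] [su2 /andP[s2x _] L2 NE2] /eqP P1 /eqP P2 lt.
have /prefixP [y Hy] : prefix w1 w2 by apply: prefix_cmp s1x s2x _; lia.
have w2r : w2 = rev y ++ w1 by rewrite {1}P2 Hy rev_cat -P1.
have w1n : w1 <> [::] by move=> E; apply: NE1; left.
have ny : 0 < size y by move: lt; rewrite Hy size_cat; lia.
suff claim : forall n v, size (suf r par lab v) <= n -> v != r ->
    prefix w2 (suf r par lab v) -> False.
  by case: L2 => v [nv Hv]; exact: (claim _ v (leqnn _) nv Hv).
elim=> [|n IH] v Hs nv Hp.
  have := size_prefix Hp; move: lt; lia.
move/prefixP: (Hp) => [t Ht].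
have [v' Hv'] : exists v', suf r par lab v' = drop (size y) (suf r par lab v).
  apply: suf_drop; rewrite Ht w2r !size_cat size_rev; lia.
rewrite Ht w2r -catA drop_size_cat ?size_rev // in Hv'.
have nv' : v' != r.
  apply/eqP => E; rewrite E suf_r in Hv'.
  by move: Hv'; case: (w1) w1n.
apply: (IH v') => //.
  move: Hs; rewrite Hv' Ht w2r !size_cat size_rev; lia.
apply: prefix_trans s2x _.
apply: (stepA He su1 s1x); first by exists v'.
by rewrite Hv'; exact: prefix_prefix.
Qed.

End H.

Theorem lemma2 (Sigma : eqType) (V : finType) (r : V) (par : V -> V)
    (lab : V -> Sigma) (dollar : Sigma) :
  is_trie r par lab dollar ->
  forall u x : seq Sigma, STedge r par lab u x ->
  forall w1 w2 : seq Sigma,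
    implicit_on_edge r par lab u x w1 -> implicit_on_edge r par lab u x w2 ->
    palindrome w1 -> palindrome w2 -> w1 = w2.
Proof.
case=> _ Hiter _ _ _ u x He w1 w2 H1 H2 P1 P2.
case: (ltngtP (size w1) (size w2)) => lt.
- by case: (key Hiter He H1 H2 P1 P2 lt).
- by case: (key Hiter He H2 H1 P2 P1 lt).
case: H1 => _ /andP[s1x _] _ _; case: H2 => _ /andP[s2x _] _ _.
move: s1x s2x; rewrite !prefixE lt => /eqP E1 /eqP E2.
by rewrite -E1 E2.
Qed.
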